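(* For every $\delta$ with $0<\delta<\gamma$ there exists an integer $K\ge1$ such that for every positive integer $B$, every pre-sorted online $B$-bounded space algorithm $ALG$ for the classic bin packing problem, and every positive integer $m$, there exists a sorted item sequence $I$ such that $OPT(I)=m$ and $ALG(I)>(\gamma-\delta)\cdot OPT(I)-B(K-1)$.
   Context: Define $\pi_1=2$ and $\pi_{i+1}=\pi_i(\pi_i-1)+1$ for $i\ge1$, and $\gamma=\sum_{i=1}^\infty\frac{1}{\pi_i-1}\approx1.69$. Classic bin packing: an item sequence $I=(a_1,\dots,a_n)\in(0,1]^n$ must be packed into bins of capacity $1$; $OPT(I)$ is the minimum number of non-empty bins, $ALG(I)$ the number used by $ALG$. $I$ is sorted if $a_1\ge\cdots\ge a_n$. A pre-sorted online algorithm first sorts the input in non-increasing order and then repeatedly packs the head (first) item of the currently remaining sorted sequence into a bin, each decision depending only on the items already packed and the current item, without seeing other remaining items. A bin is open if it contains an item and the algorithm may still pack items into it; closed bins never receive further items. A $B$-bounded space algorithm keeps at most $B$ open bins at any time. *)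

(* Defs.v *)
From HB Require Import structures.
From mathcomp Require Import all_boot all_order all_algebra.
From mathcomp Require Import all_classical all_reals all_analysis.
Set Implicit Arguments. Unset Strict Implicit. Unset Printing Implicit Defensive.
Import Order.TTheory GRing.Theory Num.Theory numFieldNormedType.Exports.
Local Open Scope ring_scope.

(* pi_seq i = pi_{i+1} :  pi_1 = 2, pi_{i+1} = pi_i (pi_i - 1) + 1 *)
Fixpoint pi_seq (i : nat) : nat :=
  match i with
  | 0 => 2
  | i'.+1 => (pi_seq i' * (pi_seq i' - 1) + 1)%N
  end.

Definition gamma (R : realType) : R :=
  limn (series (fun i : nat => ((pi_seq i)%:R - 1 : R)^-1) : R^nat).

Section BinPacking.
Variable R : realType.

Definition items_ok (I : seq R) : bool := all (fun a => (0 < a) && (a <= 1)) I.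

Definition sorted_input (I : seq R) : bool := sorted (fun a b => b <= a) I.

Definition packable (I : seq R) (k : nat) : Prop :=
  exists f : nat -> nat,
    (forall i, (i < size I)%N -> (f i < k)%N) /\
    (forall b, (b < k)%N ->
       \sum_(i < size I | f i == b) I`_i <= 1).

Definition is_OPT (I : seq R) (m : nat) : Prop :=
  packable I m /\ forall k, (k < m)%N -> ~ packable I k.

(* State of an online algorithm: the bins opened so far, in order of opening;
   each bin is (its items, is it still open?). *)
Definition state := seq (seq R * bool).

(* A decision for the current item: (j, C) means pack the item into bin j
   (j = number of bins so far means: open a new bin), and afterwards close
   the bins whose indices are in C. *)
Definition decision := (nat * seq nat)%type.

(* A pre-sorted online algorithm: the decision depends only on the items
   already packed (in order) and on the current item. *)
Definition online_alg := seq R -> R -> decision.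

Definition load (b : seq R) : R := \sum_(y <- b) y.

(* One step; None if the decision is illegal or violates the B-bounded
   space requirement. *)
Definition step (B : nat) (st : state) (x : R) (d : decision) : option state :=
  let j := d.1 in
  let C := d.2 in
  let st1 :=
    if (j < size st)%N then
      let bo := nth ([::], false) st j in
      if bo.2 && (load bo.1 + x <= 1) then Some (set_nth ([::], false) st j (rcons bo.1 x, true))
      else None
    else if j == size st then Some (rcons st ([:: x], true)) else None in
  match st1 with
  | None => None
  | Some s1 =>
      let s2 := mkseq (fun i => let p := nth ([::], false) s1 i in
                                if i \in C then (p.1, false) else p) (size s1) in
      if (count (fun p => p.2) s2 <= B)%N then Some s2 else None
  end.

Fixpoint run_aux (B : nat) (A : online_alg) (past : seq R) (st : state) (I : seq R)
  : option state :=
  match I with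
  | [::] => Some st
  | x :: I' =>
      match step B st x (A past x) with
      | None => None
      | Some st' => run_aux B A (rcons past x) st' I'
      end
  end.

Definition run (B : nat) (A : online_alg) (I : seq R) : option state :=
  run_aux B A [::] [::] (sort (fun a b => b <= a) I).

Definition bounded_space_alg (B : nat) (A : online_alg) : Prop :=
  forall I : seq R, items_ok I -> run B A I <> None.

(* ALG(I) = number of bins used (all opened bins are non-empty) *)
Definition alg_cost (B : nat) (A : online_alg) (I : seq R) : nat :=
  match run B A I with Some st => size st | None => 0 end.

End BinPacking.

(* Main.v *)
Require Import Defs.
From HB Require Import structures.
From mathcomp Require Import all_boot all_order all_algebra.
From mathcomp Require Import all_classical all_reals all_analysis.
From mathcomp Require Import zify ring lra.
Import Order.TTheory GRing.Theory Num.Theory numFieldNormedType.Exports.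
Local Open Scope ring_scope.
Set Implicit Arguments. Unset Strict Implicit.

Definition openb (R : realType) (st : state R) : nat := count (fun p => p.2) st.
Definition gpot (R : realType) (p : nat) (x : R) (b : seq R * bool) : nat :=
  if b.2 then (p.-1 - count (pred1 x) b.1)%N else 0%N.
Definition Gpot (R : realType) (p : nat) (x : R) (st : state R) : nat :=
  (\sum_(b <- st) gpot p x b)%N.
Definition nnst (R : realType) (st : state R) : bool :=
  all (fun b => all (fun y => 0 <= y) b.1) st.

Lemma count_load (R : realType) (s : seq R) x :
  all (fun y => 0 <= y) s -> (count (pred1 x) s)%:R * x <= load s.
Proof.
elim: s => [|y s IH] /=; first by rewrite /load big_nil mul0r.
move=> /andP [y0 Hs]; have := IH Hs; rewrite /load big_cons natrD mulrDl.
case: eqP => [->|_] /= H; rewrite ?mul1r ?mul0r; lra.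
Qed.

Lemma close_props (R : realType) p (x : R) (C : seq nat) (s1 : state R) :
  nnst s1 ->
  let s2 := mkseq (fun i => if i \in C then ((nth ([::], false) s1 i).1, false)
                          else nth ([::], false) s1 i) (size s1) in
  [/\ nnst s2, (Gpot p x s2 <= Gpot p x s1)%N & size s2 = size s1].
Proof.
move=> nn s2; split; last by rewrite size_mkseq.
- apply/allP => b /mapP [i]; rewrite mem_iota add0n => Hi ->.
  have := allP nn _ (mem_nth ([::], false) Hi).
  by case: ifP.
- rewrite /Gpot /s2 [in X in (_ <= X)%N](_ : s1 = mkseq (nth ([::],false) s1) (size s1)); last by rewrite mkseq_nth.
  rewrite /mkseq !big_map.
  apply: leq_sum => i _; case: ifP => _ //.
Qed.

Lemma step_inv (R : realType) B (st st' : state R) x d p :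
  0 <= x -> 1 < p%:R * x -> (1 < p)%N -> nnst st ->
  step B st x d = Some st' ->
  [/\ nnst st', (openb st' <= B)%N &
     (Gpot p x st' + 1 + p.-1 * size st <= Gpot p x st + p.-1 * size st')%N].
Proof.
move=> x0 px p1 nn; case: d => j C; rewrite /step /=.
case E1: (if (j < size st)%N then _ else _) => [s1|] //.
case: ifP => // HB [<-].
have [nn1 G1] : nnst s1 /\
   (Gpot p x s1 + 1 + p.-1 * size st <= Gpot p x st + p.-1 * size s1)%N.
  move: E1; case: ltnP => Hj.
  - case: ifP => // /andP [Ho Hl] [<-].
    rewrite set_nthE Hj; set b := nth _ st j in Ho Hl *.
    have Est : st = take j st ++ b :: drop j.+1 st
      by rewrite -drop_nth // cat_take_drop.
    have Hs : size (take j st ++ (rcons b.1 x, true) :: drop j.+1 st) = size st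
      by rewrite {3}Est !size_cat.
    rewrite Hs.
    move: nn; rewrite {1}Est /nnst !all_cat /= => /and3P [H1 Hb H3].
    rewrite H1 H3 all_rcons x0 Hb; split => //.
    have EG : Gpot p x st = (Gpot p x (take j st) + gpot p x b + Gpot p x (drop j.+1 st))%N.
      by rewrite {1}Est /Gpot big_cat big_cons /=; exact: addnA.
    rewrite EG /Gpot big_cat big_cons /gpot /= Ho.
    have Hc : ((count (pred1 x) b.1).+1 < p)%N.
      have Hcl := count_load x Hb.
      have H2 : ((count (pred1 x) b.1).+1)%:R * x < p%:R * x.
        rewrite -addn1 natrD mulrDl mul1r; lra.
      have xp : 0 < x.
        rewrite lt0r x0 andbT; apply/eqP => x00; move: px; rewrite x00 mulr0; lra.
      by move: H2; rewrite ltr_pM2r // ltr_nat.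
    rewrite -cats1 count_cat /= eqxx /= addn0.
    move: Hc; set c := count_mem x b.1; set S1 := \sum_(i <- take j st) _; set S2 := \sum_(i <- drop j.+1 st) _; rewrite -!subn1; lia.
  - case: eqP => // _ [<-]; split.
      by move: nn; rewrite /nnst all_rcons /= x0 => ->.
    rewrite /Gpot -cats1 big_cat big_seq1 /gpot /= eqxx size_cat /=.
    lia.
have [nn2 G2 S2] := close_props p x C nn1.
split => //; rewrite S2; move: G1 G2; set a := Gpot _ _ (mkseq _ _); set q := (p.-1 * size st)%N; set r := (p.-1 * size s1)%N; lia.
Qed.

Lemma run_aux_cat (R : realType) B (A : online_alg R) past (st : state R) s1 s2 :
  run_aux B A past st (s1 ++ s2) =
  match run_aux B A past st s1 with
  | Some st' => run_aux B A (past ++ s1) st' s2 | None => None end.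
Proof.
elim: s1 past st => [|x s1 IH] past st /=; first by rewrite cats0.
by case: step => // st'; rewrite IH cat_rcons.
Qed.

Lemma Gpot_le (R : realType) p (x : R) (st : state R) :
  (Gpot p x st <= p.-1 * openb st)%N.
Proof.
elim: st => [|b st IH]; first by rewrite /Gpot big_nil.
rewrite /Gpot big_cons -/(Gpot p x st) /openb /= -/(openb st) mulnDr.
apply: leq_add => //; rewrite /gpot; case: b.2 => //=.
by rewrite muln1 leq_subr.
Qed.

Lemma bp_phase (R : realType) B (A : online_alg R) (x : R) p m past (st st' : state R) :
  0 <= x -> 1 < p%:R * x -> (1 < p)%N -> nnst st -> (openb st <= B)%N ->
  run_aux B A past st (nseq m x) = Some st' ->
  [/\ nnst st', (openb st' <= B)%N &
     (Gpot p x st' + m + p.-1 * size st <= Gpot p x st + p.-1 * size st')%N].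
Proof.
move=> x0 px p1; elim: m past st => [|m IH] past st nn ob /=.
  by case=> <-; split => //; lia.
case E: step => [s|] // H.
have [nn' ob' G'] := step_inv x0 px p1 nn E.
have [nn'' ob'' G''] := IH _ _ nn' ob' H.
split => //; lia.
Qed.

Lemma psq_ge2 i : (2 <= pi_seq i)%N.
Proof. elim: i => //= i IH; nia. Qed.

Lemma psq_mono i d : (pi_seq i <= pi_seq (i + d))%N.
Proof.
elim: d => [|d IH]; first by rewrite addn0.
rewrite addnS /=; have := psq_ge2 (i + d); nia.
Qed.

Lemma psq_rec (R : realType) i :
  ((pi_seq i.+1)%:R : R) = (pi_seq i)%:R * ((pi_seq i)%:R - 1) + 1.
Proof. by rewrite /= natrD natrM natrB // ltnW // psq_ge2. Qed.

Lemma psq_ge2R (R : realType) i : (2 : R) <= (pi_seq i)%:R.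
Proof. by rewrite ler_nat psq_ge2. Qed.

Lemma telesc (R : realType) i :
  \sum_(t < i) ((pi_seq t)%:R : R)^-1 = 1 - ((pi_seq i)%:R - 1)^-1.
Proof.
elim: i => [|i IH].
  by rewrite big_ord0 /= (_ : (2%:R : R) - 1 = 1) ?invr1 ?subrr //; lra.
rewrite big_ord_recr /= IH psq_rec.
have := psq_ge2R R i; set P := ((pi_seq i)%:R : R) => HP.
have H1 : P != 0 by apply: lt0r_neq0; lra.
have H2 : P - 1 != 0 by apply: lt0r_neq0; lra.
have H3 : P * (P - 1) + 1 - 1 != 0.
  by rewrite addrK mulf_neq0.
field.
by rewrite H1 H2 H3.
Qed.

Definition uu (R : realType) (i : nat) : R := ((pi_seq i)%:R - 1)^-1.

Lemma uu_ge0 (R : realType) i : 0 <= uu R i.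
Proof. by rewrite /uu invr_ge0; have := psq_ge2R R i; lra. Qed.

Lemma series_ub (R : realType) n : series (uu R) n <= 2 - 2 * uu R n.
Proof.
elim: n => [|n IH].
  by rewrite /series /= big_geq // /uu /= (_ : (2%:R : R) - 1 = 1) ?invr1; lra.
rewrite seriesSr.
have := psq_ge2R R n; set P := ((pi_seq n)%:R : R) => HP.
have E : uu R n.+1 = uu R n * P^-1.
  rewrite /uu psq_rec -/P addrK invfM mulrC //.
have HPi : P^-1 * P = 1 by rewrite mulVf //; apply: lt0r_neq0; lra.
have HPi0 : 0 <= P^-1 by rewrite invr_ge0; lra.
have := uu_ge0 R n.
rewrite E; nra.
Qed.

Lemma exists_k (R : realType) (delta : R) : 0 < delta ->
  exists k, (0 < k)%N /\ gamma R - delta < series (uu R) k.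
Proof.
move=> d0.
have nd : nondecreasing_seq (series (uu R) : R^nat).
  by move=> a b ab; apply: nondecreasing_series => // n _ _; apply: uu_ge0.
have cv : cvgn (series (uu R) : R^nat).
  apply: nondecreasing_is_cvgn => //; exists 2 => _ [n _ <-].
  have := series_ub R n; have := uu_ge0 R n; lra.
have Hg : gamma R = limn (series (uu R) : R^nat) by [].
have := @lt_lim R (series (uu R) : R^nat) (gamma R - delta / 2) nd cv.
rewrite -Hg => /(_ ltac:(lra)) [N _ HN].
exists N.+1; split => //.
have := HN N.+1 (leqnSn N) => /=; lra.
Qed.

Definition xs (R : realType) (eps : R) (t : nat) : R := ((pi_seq t)%:R)^-1 + eps.

Lemma flat_mkseq (R : realType) m k (f : nat -> R) : (0 < m)%N ->
  mkseq (fun j => f (j %/ m)%N) (k * m)%N = flatten [seq nseq m (f t) | t <- iota 0 k].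
Proof.
move=> m0; elim: k => [|k IH]; first by rewrite mul0n.
rewrite mulSnr /mkseq iotaD map_cat -/(mkseq _ _) IH.
rewrite -addn1 iotaD map_cat flatten_cat /= cats0; congr (_ ++ _).
apply: (@eq_from_nth _ 0) => [|i]; rewrite size_map size_iota ?size_nseq // => Hi.
rewrite (nth_map 0) ?size_iota // nth_iota // nth_nseq Hi add0n.
by rewrite divnMDl // divn_small // addn0.
Qed.

Lemma phases (R : realType) B (A : online_alg R) m (x : nat -> R) :
  (forall t, 0 <= x t) -> (forall t, 1 < (pi_seq t)%:R * x t) ->
  forall i st, run_aux B A [::] [::] (flatten [seq nseq m (x t) | t <- iota 0 i]) = Some st ->
  [/\ nnst st, (openb st <= B)%N &
      \sum_(t < i) ((m%:R : R) / ((pi_seq t)%:R - 1) - B%:R) <= (size st)%:R].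
Proof.
move=> x0 px; elim => [|i IH] st.
  by case=> <-; rewrite big_ord0.
rewrite -addn1 iotaD map_cat flatten_cat /= cats0 run_aux_cat.
case E: run_aux => [s|] // H.
have [nn ob Hs] := IH s E.
have [nn' ob' G] := bp_phase (x0 i) (px i) (psq_ge2 i) nn ob H.
split => //; rewrite addn1 big_ord_recr /=.
have Gle := Gpot_le (pi_seq i) (x i) s.
have obq : ((pi_seq i).-1 * openb s <= (pi_seq i).-1 * B)%N by rewrite leq_mul2l ob orbT.
have HN : (m + (pi_seq i).-1 * size s <= (pi_seq i).-1 * B + (pi_seq i).-1 * size st)%N.
  move: G Gle obq; set a := Gpot _ _ st; set b := Gpot _ _ s;
  set c := ((pi_seq i).-1 * size s)%N; set d := ((pi_seq i).-1 * size st)%N; 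
  set e := ((pi_seq i).-1 * openb s)%N; set f := ((pi_seq i).-1 * B)%N; lia.
move: HN; rewrite -(ler_nat R) !natrD !natrM -subn1 natrB ?(ltnW (psq_ge2 i)) //.
have := psq_ge2R R i; set P := ((pi_seq i)%:R : R) => HP HN.
have : m%:R / (P - 1%:R) <= B%:R + (size st)%:R - (size s)%:R.
  rewrite ler_pdivrMr; last by lra.
  nra.
lra.
Qed.

Lemma pack_sum (R : realType) (f : nat -> R) m k b : (b < m)%N ->
  \sum_(0 <= j < k * m | (j %% m == b)%N) f (j %/ m)%N = \sum_(0 <= t < k) f t.
Proof.
move=> bm; have m0 : (0 < m)%N by lia.
elim: k => [|k IH]; first by rewrite mul0n !big_geq.
rewrite mulSnr (@big_cat_nat _ _ _ (k * m)) ?leq_addr //= IH big_nat_recr //=.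
congr (_ + _).
rewrite -{1}(add0n (k * m)%N) big_addn addKn.
rewrite big_nat_cond (eq_bigl (fun j => (0 <= j < m)%N && (j == b))); last first.
  move=> j /=; case: (ltnP j m) => Hj //=.
  by rewrite addnC modnMDl modn_small.
rewrite -big_nat_cond big_nat1_eq bm /=.
by rewrite addnC divnMDl // divn_small // addn0.
Qed.
Unset Implicit Arguments. Set Strict Implicit.
Theorem theorem6 (R : realType) (delta : R) :
  0 < delta -> delta < gamma R ->
  exists K : nat, (1 <= K)%N /\
    forall (B : nat) (A : online_alg R), (0 < B)%N ->
      bounded_space_alg B A ->
      forall m : nat, (0 < m)%N ->
        exists I : seq R,
          items_ok I /\ sorted_input I /\ is_OPT I m /\
          (alg_cost B A I)%:R > (gamma R - delta) * m%:R - (B * (K - 1))%:R.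
Proof.
move=> d0 dg.
have [k [k0 Hk]] := exists_k d0.
exists k.+1; split => //.
move=> B A B0 Halg m m0.
set P := ((pi_seq k)%:R : R).
have HP3 : 3 <= P.
  have := psq_mono 1 k.-1; rewrite add1n prednK // => H.
  by rewrite /P ler_nat.
have Hk1 : 1 <= (k%:R : R) by rewrite ler1n.
set eps := (k%:R * (P - 1))^-1.
have eps0 : 0 < eps by rewrite /eps invr_gt0; nra.
have epsh : eps <= 2^-1.
  by rewrite /eps lef_pV2 ?posrE; nra.
set x := xs eps.
have pinv0 t : 0 < ((pi_seq t)%:R : R)^-1 by rewrite invr_gt0 ltr0n; have := psq_ge2 t; lia.
have x0' t : 0 < x t by rewrite /x /xs; have := pinv0 t; lra.
have x0 t : 0 <= x t by apply: ltW.
have px t : 1 < (pi_seq t)%:R * x t.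
  rewrite /x /xs mulrDr mulfV; last by apply: lt0r_neq0; rewrite ltr0n; have := psq_ge2 t; lia.
  have := psq_ge2R R t; nra.
have xmono t t' : (t <= t')%N -> x t' <= x t.
  move=> tt; rewrite /x /xs lerD2r lef_pV2 ?posrE ?ler_nat.
  - by have := psq_mono t (t' - t); rewrite subnKC.
  - by rewrite ltr0n; have := psq_ge2 t'; lia.
  - by rewrite ltr0n; have := psq_ge2 t; lia.
have xle t : x t <= 1.
  apply: le_trans (xmono 0%N t (leq0n t)) _.
  rewrite /x /xs /=; lra.
set I := mkseq (fun j => x (j %/ m)%N) (k * m)%N.
have Hsz : size I = (k * m)%N by rewrite size_mkseq.
have Inth j : (j < k * m)%N -> I`_j = x (j %/ m)%N by move=> Hj; rewrite nth_mkseq.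
have Inn j : 0 <= I`_j.
  case: (ltnP j (k * m)) => Hj; first by rewrite Inth.
  by rewrite nth_default // Hsz.
have Iok : items_ok I.
  rewrite /items_ok /I /mkseq all_map; apply/allP => j _ /=.
  by rewrite x0' xle.
have Isort : sorted_input I.
  apply/(sortedP 0) => i; rewrite Hsz => Hi.
  rewrite !Inth; [|lia|lia].
  by apply: xmono; apply: leq_div2r.
have Iopt : is_OPT I m.
  split.
  - exists (fun j => (j %% m)%N); split; first by move=> i _; rewrite ltn_pmod.
    move=> b bm.
    rewrite -(big_mkord (fun i => (i %% m)%N == b) (fun i => I`_i)) Hsz.
    rewrite big_nat_cond (eq_bigr (fun j => x (j %/ m)%N)); last first.
      by move=> i /andP [/andP [_ Hi] _]; apply: Inth.
    rewrite -big_nat_cond pack_sum // big_mkord /x /xs big_split /= telesc.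
    rewrite sumr_const card_ord -mulr_natl -/P /eps.
    have HP1 : P - 1 != 0 by apply: lt0r_neq0; lra.
    have Hk0 : (k%:R : R) != 0 by apply: lt0r_neq0; lra.
    rewrite le_eqVlt; apply/orP; left; apply/eqP; field.
    by rewrite HP1 Hk0.
  - move=> k' k'm [f [Hf Hsum]].
    have mk : (m <= k * m)%N by rewrite leq_pmull.
    have [j1 [j2 [H1 [H2 [Hne Hfe]]]]] : exists j1 j2,
        (j1 < m)%N /\ (j2 < m)%N /\ j1 <> j2 /\ f j1 = f j2.
      apply: contrapT => Hn.
      have Hg : forall j : 'I_m, (f j < k')%N.
        by move=> j; apply: Hf; rewrite Hsz; exact: leq_trans (ltn_ord j) mk.
      have inj : injective (fun j : 'I_m => Ordinal (Hg j)).
        move=> a b /(congr1 val) /= E; apply/val_inj; apply: contrapT => ne.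
        by apply: Hn; exists (val a), (val b); split; [exact: ltn_ord | split; [exact: ltn_ord | split]].
      by have := leq_card _ inj; rewrite !card_ord; lia.
    have j1s : (j1 < size I)%N by rewrite Hsz; lia.
    have j2s : (j2 < size I)%N by rewrite Hsz; lia.
    have := Hsum (f j1) (Hf j1 j1s).
    rewrite (bigD1 (Ordinal j1s)) //= (bigD1 (Ordinal j2s)) /=; last first.
      rewrite Hfe eqxx /=; apply/eqP => E; apply: Hne.
      by move/(congr1 val): E => /= ->.
    set S := (X in _ + (_ + X) <= 1) => H.
    have S0 : 0 <= S by apply: sumr_ge0 => i _; apply: Inn.
    move: H; rewrite !Inth; [|lia|lia].
    rewrite !divn_small // /x /xs /=; lra.
exists I; split => //; split => //; split => //.
have Hrun := Halg I Iok.
rewrite /alg_cost; move: Hrun; rewrite /run sorted_sort //; last first.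
  by move=> a b c H1 H2; exact: le_trans H2 H1.
case E: run_aux => [st|] // _.
move: E; rewrite /I flat_mkseq // => E.
have [_ _ Hs] := phases x0 px E.
have Esum : \sum_(t < k) ((m%:R : R) / ((pi_seq t)%:R - 1) - B%:R) =
    m%:R * series (uu R) k - k%:R * B%:R.
  rewrite sumrB sumr_const card_ord /series /= big_mkord mulr_sumr.
  congr (_ - _); last by rewrite mulr_natl.
rewrite Esum in Hs.
rewrite subn1 /= natrM.
have Hm : 1 <= (m%:R : R) by rewrite ler1n.
have : (gamma R - delta) * m%:R < series (uu R) k * m%:R.
  by rewrite ltr_pM2r //; lra.
nra.
Qed.
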